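(* Let $(x_n,y_n)_{n\in\mathbb Z}$ and $(x'_n,y'_n)_{n\in\mathbb Z}$ be two elliptic sequences in general position on the same biquadratic polynomial $F$, let $a\ne0$ and suppose $x'_0-x'_{-1}=2/a$. Let $f$ be defined on $\{x_n:n\ge0\}$ with $f(x_0)=c_0\ne0$ and $(\mathcal Df)(y_n)=a(\mathcal Mf)(y_n)$ for $n\ge0$, i.e. $f(x_{n+1})=\frac{1+a(x_{n+1}-x_n)/2}{1-a(x_{n+1}-x_n)/2}f(x_n)$ (assume $a(x_{n+1}-x_n)\ne2$). Let $(c_n)_{n\ge0}$ be the unique coefficients such that for every $N$ the sum $\sum_{n=0}^Nc_n\frac{(x-x_0)\cdots(x-x_{n-1})}{(x-x'_0)\cdots(x-x'_{n-1})}$ interpolates $f$ at $x_0,\dots,x_N$. Then for all $n\ge0$ $$c_n=\frac{x_n-x'_{n-1}}{x_0-x'_{-1}}\,\eta_0\eta_1\cdots\eta_{n-1}\,c_0,\qquad \eta_j=\frac{(x_j-x'_{-1})\big(1+a(x'_j-x'_{j-1})/2\big)}{(x'_j-x'_{-1})\big(1-a(x_{j+1}-x_j)/2\big)},$$ equivalently $\dfrac{c_{n+1}}{c_n}=\dfrac{(x_n-x'_{-1})(1+a(x'_n-x'_{n-1})/2)(x_{n+1}-x'_n)}{(x'_n-x'_{-1})(1-a(x_{n+1}-x_n)/2)(x_n-x'_{n-1})}$ for $n\ge1$.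
   Context: $F(x,y)=\sum_{i,j=0}^2c_{i,j}x^iy^j$ biquadratic. An elliptic sequence on $F$ is $(x_n,y_n)_{n\in\mathbb Z}$ such that for every $n$, $x_n,x_{n+1}$ are the two roots of $F(\cdot,y_n)$ and $y_{n-1},y_n$ the two roots of $F(x_n,\cdot)$; general position means all $x_n,x'_n$ distinct and all $y_n,y'_n$ distinct, with the leading coefficients $X_2(x)=\sum_ic_{i,2}x^i$, $Y_2(y)=\sum_jc_{2,j}y^j$ nonvanishing at these points. $(\mathcal Df)(y_n)=\frac{f(x_{n+1})-f(x_n)}{x_{n+1}-x_n}$, $(\mathcal Mf)(y_n)=\frac{f(x_n)+f(x_{n+1})}2$. Empty products equal $1$. *)

(* Defs.v *)
From HB Require Import structures.
From mathcomp Require Import all_boot all_order all_algebra.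
Set Implicit Arguments. Unset Strict Implicit. Unset Printing Implicit Defensive.
Import Order.TTheory GRing.Theory Num.Theory.
Local Open Scope ring_scope.

Section Defs.
Variable R : numClosedFieldType.

Definition bqF (c : nat -> nat -> R) (x y : R) : R :=
  \sum_(i < 3) \sum_(j < 3) c i j * x ^+ i * y ^+ j.

Definition X2 (c : nat -> nat -> R) (x : R) : R := \sum_(i < 3) c i 2%N * x ^+ i.
Definition Y2 (c : nat -> nat -> R) (y : R) : R := \sum_(j < 3) c 2%N j * y ^+ j.

(* Elliptic sequence: x_n, x_{n+1} are the two roots of F(., y_n) and
   y_{n-1}, y_n are the two roots of F(x_n, .). *)
Definition elliptic_seq (c : nat -> nat -> R) (x y : int -> R) : Prop :=
  forall n : int,
    (forall t : R, bqF c t (y n) = Y2 c (y n) * ((t - x n) * (t - x (n + 1)))) /\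
    (forall s : R, bqF c (x n) s = X2 c (x n) * ((s - y (n - 1)) * (s - y n))).

Definition general_position (c : nat -> nat -> R) (x y : int -> R) : Prop :=
  injective x /\ injective y /\
  (forall n : int, X2 c (x n) != 0 /\ Y2 c (y n) != 0).

(* Divided difference and mean operators at y_n. *)
Definition Dop (x : int -> R) (f : R -> R) (n : int) : R :=
  (f (x (n + 1)) - f (x n)) / (x (n + 1) - x n).
Definition Mop (x : int -> R) (f : R -> R) (n : int) : R :=
  (f (x n) + f (x (n + 1))) / 2.

Definition eta_coef (a : R) (x x' : int -> R) (j : nat) : R :=
  ((x j%:Z - x' (-1)) * (1 + a * (x' j%:Z - x' (j%:Z - 1)) / 2)) /
  ((x' j%:Z - x' (-1)) * (1 - a * (x (j%:Z + 1) - x j%:Z) / 2)).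

End Defs.

(* Main.v *)
Require Import Defs.
From HB Require Import structures.
From mathcomp Require Import all_boot all_order all_algebra.
From mathcomp Require Import ring zify.
Import Order.TTheory GRing.Theory Num.Theory.
Local Open Scope ring_scope.

Section Gen.
Variable R : numClosedFieldType.
Variable c : nat -> nat -> R.

Definition Y1 (s : R) : R := \sum_(j < 3) c 1%N j * s ^+ j.
Definition Y0 (s : R) : R := \sum_(j < 3) c 0%N j * s ^+ j.

Lemma bqF_exp t s : bqF c t s = Y0 s + Y1 s * t + Y2 c s * t ^+ 2.
Proof.
rewrite /bqF /Y0 /Y1 /Y2 !big_ord_recr !big_ord0 /=.
rewrite !expr0 !expr1. ring.
Qed.

Lemma rel_gen (x y x2 y2 : int -> R) :
  elliptic_seq c x y -> elliptic_seq c x2 y2 -> forall m k : int,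
  Y2 c (y m) * ((x m - x2 k) * (x (m + 1) - x2 k)) =
  X2 c (x2 k) * ((y m - y2 (k - 1)) * (y m - y2 k)).
Proof.
move=> E1 E2 m k.
have h1 := (E1 m).1 (x2 k). have h2 := (E2 k).2 (y m).
rewrite -h2 h1. ring.
Qed.

Lemma rel_Y1 (x y : int -> R) : elliptic_seq c x y -> forall m : int,
  Y2 c (y m) * (x m + x (m + 1)) = - Y1 (y m).
Proof.
move=> E1 m.
have h1 := (E1 m).1 1. have h2 := (E1 m).1 (-1).
rewrite !bqF_exp in h1 h2.
have : 2 * Y1 (y m) = - 2 * (Y2 c (y m) * (x m + x (m + 1))).
  have -> : 2 * Y1 (y m) = (Y0 (y m) + Y1 (y m) * 1 + Y2 c (y m) * 1 ^+ 2) -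
     (Y0 (y m) + Y1 (y m) * (-1) + Y2 c (y m) * (-1) ^+ 2) by ring.
  rewrite h1 h2. ring.
move=> h.
have h2n : (2 : R) != 0 by rewrite pnatr_eq0.
apply: (mulfI h2n). rewrite mulrN h. ring.
Qed.

End Gen.
Arguments Y1 {R} c s.
Arguments Y0 {R} c s.
Arguments rel_Y1 {R c x y}.
Arguments rel_gen {R c x y x2 y2}.

Lemma prod_split (T : comNzRingType) (F : nat -> T) j n : (j < n)%N ->
  \prod_(0<=i<n) F i = \prod_(0<=i<j) F i * (F j * \prod_(j.+1<=i<n) F i).
Proof. move=> hj; rewrite (big_cat_nat (leq0n j) (ltnW hj)) /= [\prod_(j <= i < n) _]big_ltn //. Qed.

Section PF.
Context {R : numClosedFieldType}.

Lemma prod_neq0 (F : nat -> R) m n : (forall i, (m <= i < n)%N -> F i != 0) ->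
  \prod_(m<=i<n) F i != 0.
Proof. move=> h; rewrite prodf_seq_neq0; apply/allP => i; rewrite mem_index_iota => hi /=; exact: h. Qed.

Lemma prod_eq0 (F : nat -> R) m n k : (m <= k < n)%N -> F k = 0 -> \prod_(m<=i<n) F i = 0.
Proof. move=> hk h; apply/eqP; rewrite prodf_seq_eq0; apply/hasP; exists k; first by rewrite mem_index_iota. by rewrite h eqxx. Qed.

Variables (n : nat) (p q : nat -> R).
Hypothesis qinj : forall i j, (i < n)%N -> (j < n)%N -> q i = q j -> i = j.

Definition Qex j (t : R) := \prod_(0 <= i < j) (t - q i) * \prod_(j.+1 <= i < n) (t - q i).
Definition rr j := \prod_(0 <= i < n) (q j - p i) / Qex j (q j).

Lemma Qex_split j t : (j < n)%N -> \prod_(0<=i<n) (t - q i) = Qex j t * (t - q j).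
Proof. move=> hj; rewrite (@prod_split _ (fun i => t - q i) j n hj) /Qex; ring. Qed.

Lemma Qex_qj j : (j < n)%N -> Qex j (q j) != 0.
Proof.
move=> hj; rewrite /Qex mulf_neq0 //; apply: prod_neq0 => i /andP[h1 h2];
 rewrite subr_eq0; apply/eqP => e.
- have := qinj _ _ hj (ltn_trans h2 hj) e; lia.
- have := qinj _ _ hj h2 e; lia.
Qed.

Lemma size_sum_le (F : nat -> {poly R}) m k l : (forall j, (m <= j < k)%N -> (size (F j) <= l)%N) ->
  (size (\sum_(m<=j<k) F j)%R <= l)%N.
Proof.
move=> h; rewrite big_seq; elim/big_rec: _ => [|j r hj hr]; first by rewrite size_poly0.
rewrite (leq_trans (size_polyD _ _)) // geq_max hr andbT; apply: h.
by move: hj; rewrite mem_index_iota.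
Qed.

Lemma size_prodX (F : nat -> R) m k : size (\prod_(m<=i<k) ('X - (F i)%:P)) = (k - m).+1.
Proof. by rewrite size_prod_XsubC size_iota. Qed.

Lemma monic_sub_size (A B : {poly R}) k : A \is monic -> B \is monic ->
  size A = k.+1 -> size B = k.+1 -> (size (A - B)%R <= k)%N.
Proof.
move=> /monicP mA /monicP mB sA sB; apply/leq_sizeP => j hj; rewrite coefB.
case: (ltngtP j k) => hjk.
- lia.
- by rewrite !nth_default ?sA ?sB ?subrr.
- by subst j; move: mA mB; rewrite !lead_coefE sA sB /= => -> ->; rewrite subrr.
Qed.

Definition Pp := \prod_(0<=i<n) ('X - (p i)%:P).
Definition Qp := \prod_(0<=i<n) ('X - (q i)%:P).
Definition Qexp j := \prod_(0<=i<j) ('X - (q i)%:P) * \prod_(j.+1<=i<n) ('X - (q i)%:P).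
Definition Dp := Pp - Qp - \sum_(0<=j<n) (rr j)%:P * Qexp j.

Lemma Dp_horner t : Dp.[t] = \prod_(0<=i<n) (t - p i) - \prod_(0<=i<n) (t - q i)
   - \sum_(0<=j<n) rr j * Qex j t.
Proof.
rewrite /Dp !hornerD !hornerN horner_sum /Pp /Qp !horner_prod.
congr (_ - _ - _).
- by apply: eq_bigr => i _; rewrite hornerXsubC.
- by apply: eq_bigr => i _; rewrite hornerXsubC.
apply: eq_bigr => j _; rewrite hornerCM /Qexp hornerM !horner_prod /Qex.
by congr (_ * (_ * _)); apply: eq_bigr => i _; rewrite hornerXsubC.
Qed.

Lemma Qex_q0 j k : (j < n)%N -> (k < n)%N -> j != k -> Qex j (q k) = 0.
Proof.
move=> hj hk hjk; rewrite /Qex; case: (ltngtP k j) => h.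
- by rewrite (@prod_eq0 _ 0 j k) ?mul0r ?subrr //; apply/andP; split.
- by rewrite (@prod_eq0 _ j.+1 n k) ?mulr0 ?subrr //; apply/andP; split.
- by move: hjk; rewrite h eqxx.
Qed.

Lemma Dp_root k : (k < n)%N -> Dp.[q k] = 0.
Proof.
move=> hk; rewrite Dp_horner (@prod_eq0 (fun i => q k - q i) 0 n k) ?subrr ?subr0 //.
rewrite [\sum_(0<=j<n) _](bigD1_seq k) /= ?mem_index_iota ?iota_uniq //.
rewrite [X in rr k * _ + X]big1_seq; last first.
  move=> j /andP[hjk]; rewrite mem_index_iota => /andP[_ hj].
  by rewrite Qex_q0 // ?mulr0 // eq_sym.
by rewrite addr0 /rr divfK ?Qex_qj // subrr.
Qed.

Lemma Dp0 : Dp = 0.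
Proof.
apply: (@roots_geq_poly_eq0 _ _ [seq q i | i <- index_iota 0 n]).
- apply/allP => r /mapP [k]; rewrite mem_index_iota => /andP[_ hk] ->.
  by rewrite /root Dp_root.
- rewrite map_inj_in_uniq ?iota_uniq // => i j; rewrite !mem_index_iota.
  by move=> /andP[_ hi] /andP[_ hj]; apply: qinj.
- rewrite size_map size_iota subn0 /Dp.
  rewrite (leq_trans (size_polyD _ _)) // geq_max; apply/andP; split.
  + apply: monic_sub_size; rewrite ?monic_prod_XsubC ?size_prodX ?subn0 //.
  + rewrite size_polyN; apply: size_sum_le => j /andP[_ hj].
    rewrite mul_polyC (leq_trans (size_scale_leq _ _)) // /Qexp.
    rewrite (leq_trans (size_polyMleq _ _)) // !size_prodX; lia.
Qed.

Lemma pf_eq t : \prod_(0<=i<n) (t - p i) = \prod_(0<=i<n) (t - q i) + \sum_(0<=j<n) rr j * Qex j t.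
Proof. by apply/eqP; rewrite -subr_eq0 opprD addrA -Dp_horner Dp0 horner0. Qed.

Lemma pf_phi t : (forall i, (i < n)%N -> t != q i) ->
  \prod_(0<=i<n) ((t - p i) / (t - q i)) = 1 + \sum_(0<=j<n) rr j / (t - q j).
Proof.
move=> ht; have hQ : \prod_(0<=i<n) (t - q i) != 0.
  by apply: prod_neq0 => i /andP[_ hi]; rewrite subr_eq0 ht.
rewrite prodf_div pf_eq mulrDl divff // mulr_suml; congr (_ + _).
apply: eq_big_seq => j; rewrite mem_index_iota => /andP[_ hj].
have htj : t - q j != 0 by rewrite subr_eq0 ht.
have hQj : Qex j t != 0 by move: hQ; rewrite (Qex_split j t hj) mulf_eq0 negb_or => /andP[].
rewrite (Qex_split j t hj); by field; rewrite htj hQj.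
Qed.

End PF.

Section Pol.
Context {R : numClosedFieldType}.
Variables (n : nat) (z : nat -> R) (w : nat -> {poly R}).

Definition Pol := \sum_(0<=j<n) w j * (\prod_(0<=k<j) ('X - (z k)%:P) * \prod_(j.+2<=k<n.+1) ('X - (z k)%:P)).

Lemma Pol_horner t : (forall k, (k <= n)%N -> t != z k) ->
  Pol.[t] = \prod_(0<=k<n.+1) (t - z k) * \sum_(0<=j<n) (w j).[t] / ((t - z j) * (t - z j.+1)).
Proof.
move=> ht; rewrite /Pol horner_sum mulr_sumr; apply: eq_big_seq => j.
rewrite mem_index_iota => /andP[_ hj].
rewrite hornerM hornerM !horner_prod.
rewrite (@prod_split _ (fun k => t - z k) j n.+1) ?(ltnW (ltnS _)) //; last by lia.
rewrite [\prod_(j.+1 <= i < n.+1) _]big_ltn; last by lia.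
have h1 : t - z j != 0 by rewrite subr_eq0 ht //; lia.
have h2 : t - z j.+1 != 0 by rewrite subr_eq0 ht //; lia.
have -> : \prod_(0 <= i < j) ('X - (z i)%:P).[t] = \prod_(0 <= i < j) (t - z i).
  by apply: eq_bigr => i _; rewrite hornerXsubC.
have -> : \prod_(j.+2 <= i < n.+1) ('X - (z i)%:P).[t] = \prod_(j.+2 <= i < n.+1) (t - z i).
  by apply: eq_bigr => i _; rewrite hornerXsubC.
by field; rewrite h1 h2.
Qed.

Lemma Pol_top : (0 < n)%N ->
  Pol.[z n] = (w n.-1).[z n] * \prod_(0<=k<n.-1) (z n - z k).
Proof.
move=> hn; rewrite /Pol horner_sum.
case: n hn => // n' _ /=.
rewrite big_nat_recr //= big1_seq ?add0r; last first.
  move=> j; rewrite mem_index_iota => /andP[_ hj].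
  rewrite !hornerM !horner_prod (@prod_eq0 _ _ j.+2 n'.+2 n'.+1) ?mulr0 //; first lia.
  by rewrite hornerXsubC subrr.
rewrite !hornerM !horner_prod [\prod_(n'.+2 <= i < n'.+2) _]big_geq // mulr1; congr (_ * _).
by apply: eq_bigr => i _; rewrite hornerXsubC.
Qed.

Lemma Pol_bot : (0 < n)%N ->
  Pol.[z 0] = (w 0).[z 0] * \prod_(2<=k<n.+1) (z 0 - z k).
Proof.
move=> hn; rewrite /Pol horner_sum.
rewrite [\sum_(0 <= i < n) _]big_ltn //= [\sum_(1 <= i < n) _]big1_seq ?addr0; last first.
  move=> j; rewrite mem_index_iota => /andP[_ /andP[hj _]].
  by rewrite !hornerM !horner_prod (@prod_eq0 _ _ 0 j 0) ?mul0r ?mulr0 ?hornerXsubC ?subrr.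
rewrite !hornerM !horner_prod big_geq // mul1r; congr (_ * _).
by apply: eq_bigr => i _; rewrite hornerXsubC.
Qed.

Lemma Pol_size s : (forall j, (size (w j) <= s)%N) -> (size Pol <= n + s - 1)%N.
Proof.
move=> hw; apply: size_sum_le => j /andP[_ hj].
rewrite (leq_trans (size_polyMleq _ _)) //.
have hAB : (size (\prod_(0<=k<j) ('X - (z k)%:P) * \prod_(j.+2<=k<n.+1) ('X - (z k)%:P))%R <= n)%N.
  by rewrite (leq_trans (size_polyMleq _ _)) // !size_prodX -subn1; lia.
rewrite -subn1 (leq_trans (leq_sub2r 1 (leq_add (hw j) hAB))) //; lia.
Qed.

End Pol.

Section Fact.
Context {R : numClosedFieldType}.

Lemma factor_roots (p : {poly R}) (rs : seq R) s : all (root p) rs -> uniq rs ->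
  (size p <= size rs + s)%N -> exists l : {poly R}, (size l <= s)%N /\ p = l * \prod_(r <- rs) ('X - r%:P).
Proof.
move=> hr hu hs; have [q hq] := uniq_roots_prod_XsubC hr (etrans (uniq_rootsE rs) hu).
exists q; split=> //; have [->|q0] := eqVneq q 0; first by rewrite size_poly0.
move: hs; rewrite hq; set P := \prod_(z <- rs) _.
have hP : size P = (size rs).+1 by rewrite /P; exact: size_prod_XsubC.
have mP : P \is monic by rewrite /P; exact: monic_prod_XsubC.
rewrite size_Mmonic // hP addnS /=; lia.
Qed.

Lemma lin_interp (l : {poly R}) s t Y : (size l <= 2)%N -> s != t ->
  l.[Y] = l.[s] * (Y - t) / (s - t) + l.[t] * (Y - s) / (t - s).
Proof.
move=> hl hst; have hst' : s - t != 0 by rewrite subr_eq0.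
have hts' : t - s != 0 by rewrite subr_eq0 eq_sym.
pose g := l - ((l.[s] / (s - t))%:P * ('X - t%:P) + (l.[t] / (t - s))%:P * ('X - s%:P)).
have g0 : g = 0.
  apply: (@roots_geq_poly_eq0 _ _ [:: s; t]).
  - rewrite /= /root /g !hornerE /= andbT; apply/andP; split; apply/eqP.
    + by field; rewrite hst' hts'.
    + by field; rewrite hst' hts'.
  - by rewrite /= inE andbT.
  - rewrite /g /= (leq_trans (size_polyD _ _)) // geq_max hl size_polyN.
    rewrite (leq_trans (size_polyD _ _)) // geq_max.
    by rewrite !mul_polyC !(leq_trans (size_scale_leq _ _)) // size_XsubC.
have := congr1 (fun p => p.[Y]) g0; rewrite /g !hornerE /= => /eqP; rewrite subr_eq0 => /eqP ->.
by field; rewrite hst' hts'.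
Qed.

Lemma const_poly (l : {poly R}) Y Y' : (size l <= 1)%N -> l.[Y] = l.[Y'].
Proof. by move=> h; rewrite (size1_polyC h) !hornerC. Qed.

End Fact.


Section Alg.
Context {R : numClosedFieldType}.
Lemma key_alg (X1 X2v P0 Pm PN PN1 YN YN1 Zm QN QN1 Y2q Y2y Y2m X2x X2p : R) :
 Y2m * ((Pm - X1) * (P0 - X1)) = X2x * ((Zm - YN) * (Zm - YN1)) ->
 Y2m * ((Pm - PN1) * (P0 - PN1)) = X2p * ((Zm - QN) * (Zm - QN1)) ->
 Y2y * ((X1 - PN1) * (X2v - PN1)) = X2p * ((YN1 - QN) * (YN1 - QN1)) ->
 Y2q * ((PN - X1) * (PN1 - X1)) = X2x * ((QN - YN) * (QN - YN1)) ->
 Y2m != 0 -> X1 - PN1 != 0 ->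
 Y2q*(X1-PN)*(PN1-Pm)*(YN1-Zm)*(YN1-QN1)*(P0-PN1)*(Zm-YN) +
 (X2v-PN1)*(X1-Pm)*Y2y*(P0-X1)*(Zm-QN1)*(QN-Zm)*(QN-YN) = 0.
Proof.
move=> R1 R2 R3 R4 h1 h2.
have hne : (X1 - PN1) * Y2m != 0 by rewrite mulf_neq0.
apply: (mulIf hne); rewrite mul0r.
have -> : (Y2q*(X1-PN)*(PN1-Pm)*(YN1-Zm)*(YN1-QN1)*(P0-PN1)*(Zm-YN) +
 (X2v-PN1)*(X1-Pm)*Y2y*(P0-X1)*(Zm-QN1)*(QN-Zm)*(QN-YN)) * ((X1 - PN1) * Y2m) =
 - ((Y2q * ((PN - X1) * (PN1 - X1))) * (Y2m * ((Pm - PN1) * (P0 - PN1))) * ((YN1-Zm)*(YN1-QN1)*(Zm-YN)))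
 - ((Y2y * ((X1 - PN1) * (X2v - PN1))) * (Y2m * ((Pm - X1) * (P0 - X1))) * ((Zm-QN1)*(QN-Zm)*(QN-YN))) by ring.
rewrite R1 R2 R3 R4; ring.
Qed.
End Alg.

Section Main.
Variables (R : numClosedFieldType) (c : nat -> nat -> R) (x y x' y' : int -> R) (a : R).
Hypotheses (E : elliptic_seq c x y) (E' : elliptic_seq c x' y')
  (G : general_position c x y) (G' : general_position c x' y')
  (cross : forall n m : int, x n != x' m /\ y n != y' m)
  (ha : a != 0) (hx' : x' 0 - x' (-1) = 2 / a)
  (hL : forall n : nat, a * (x (n%:Z + 1) - x n%:Z) != 2).

Definition xs (i : nat) := x i%:Z.
Definition ys (i : nat) := y i%:Z.
Definition ps (i : nat) := x' i%:Z.
Definition qs (i : nat) := y' i%:Z.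
Definition zs (k : nat) := y' (k%:Z - 1).

Lemma Sz (m : nat) : (m.+1)%:Z = m%:Z + 1.
Proof. by rewrite -addn1 PoszD. Qed.

Lemma zs0 : zs 0 = y' (-1).
Proof. by rewrite /zs sub0r. Qed.

Lemma zsS k : zs k.+1 = qs k.
Proof. by rewrite /zs Sz addrK. Qed.

Lemma xs_inj i j : xs i = xs j -> i = j.
Proof. by move/(G.1) => [->]. Qed.
Lemma ys_inj i j : ys i = ys j -> i = j.
Proof. by move/(G.2.1) => [->]. Qed.
Lemma ps_inj i j : ps i = ps j -> i = j.
Proof. by move/(G'.1) => [->]. Qed.
Lemma qs_inj i j : qs i = qs j -> i = j.
Proof. by move/(G'.2.1) => [->]. Qed.
Lemma zs_inj i j : zs i = zs j -> i = j.
Proof. by rewrite /zs => /(G'.2.1) /eqP; rewrite (can_eq (subrK 1)) => /eqP [->]. Qed.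

Lemma xs_ps i j : xs i != ps j. Proof. exact: (cross _ _).1. Qed.
Lemma ys_qs i j : ys i != qs j. Proof. exact: (cross _ _).2. Qed.
Lemma ys_zs i j : ys i != zs j. Proof. exact: (cross _ _).2. Qed.
Lemma xs_pm i : xs i != x' (-1). Proof. exact: (cross _ _).1. Qed.
Lemma Y2ys m : Y2 c (ys m) != 0. Proof. exact: (G.2.2 _).2. Qed.
Lemma X2ps j : X2 c (ps j) != 0. Proof. exact: (G'.2.2 _).1. Qed.
Lemma X2xs j : X2 c (xs j) != 0. Proof. exact: (G.2.2 _).1. Qed.
Lemma Y2qs j : Y2 c (qs j) != 0. Proof. exact: (G'.2.2 _).2. Qed.

Lemma neq_sub (u v : R) : u != v -> u - v != 0.
Proof. by rewrite subr_eq0. Qed.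

Lemma rel_xp m j : Y2 c (ys m) * ((xs m - ps j) * (xs m.+1 - ps j)) =
  X2 c (ps j) * ((ys m - zs j) * (ys m - zs j.+1)).
Proof. by rewrite zsS /xs /ys /ps /qs /zs Sz; apply: rel_gen. Qed.

Lemma relY1_x m : Y2 c (ys m) * (xs m + xs m.+1) = - Y1 c (ys m).
Proof. by rewrite /xs /ys Sz; apply: rel_Y1. Qed.

Lemma relY1_p m : Y2 c (qs m) * (ps m + ps m.+1) = - Y1 c (qs m).
Proof. by rewrite /ps /qs Sz; apply: rel_Y1. Qed.

Lemma relY1_pm : Y2 c (y' (-1)) * (x' (-1) + ps 0) = - Y1 c (y' (-1)).
Proof. by have := rel_Y1 E' (-1); rewrite /ps. Qed.


Definition phi (n : nat) (t : R) := \prod_(0<=i<n) ((t - xs i) / (t - ps i)).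
Definition rrn (n j : nat) := rr n xs ps j.

Lemma ps_injn n : forall i j, (i < n)%N -> (j < n)%N -> ps i = ps j -> i = j.
Proof. by move=> i j _ _; apply: ps_inj. Qed.

Lemma phi_pf n t : (forall i, t != ps i) -> phi n t = 1 + \sum_(0<=j<n) rrn n j / (t - ps j).
Proof. by move=> ht; apply: (@pf_phi _ n xs ps (ps_injn n)) => i _. Qed.

Lemma phi_xs_pf n m : phi n (xs m) = 1 + \sum_(0<=j<n) rrn n j / (xs m - ps j).
Proof. by apply: phi_pf => i; apply: xs_ps. Qed.

Lemma phi0 t : phi 0 t = 1.
Proof. by rewrite /phi big_geq. Qed.

Lemma phi_zero n m : (m < n)%N -> phi n (xs m) = 0.
Proof.
move=> hm; rewrite /phi (@prod_eq0 _ _ 0 n m) //.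
by rewrite subrr mul0r.
Qed.

Lemma phi_neq0 n m : (n <= m)%N -> phi n (xs m) != 0.
Proof.
move=> hm; apply: prod_neq0 => i /andP[_ hi]; rewrite mulf_neq0 ?invr_eq0 ?neq_sub ?xs_ps //.
by apply/eqP => /xs_inj h; lia.
Qed.

Lemma rrn0 n : rrn n 0 = \prod_(0<=i<n) (ps 0 - xs i) / \prod_(1<=i<n) (ps 0 - ps i).
Proof. by rewrite /rrn /rr /Qex [\prod_(0 <= i < 0) _]big_geq // mul1r. Qed.

Definition quadp (a0 a1 a2 : R) : {poly R} := a0%:P + a1%:P * 'X + a2%:P * 'X^2.
Lemma quadp_horner a0 a1 a2 t : (quadp a0 a1 a2).[t] = a0 + a1 * t + a2 * t ^+ 2.
Proof. by rewrite /quadp !hornerE. Qed.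
Lemma quadp_size a0 a1 a2 : (size (quadp a0 a1 a2) <= 3)%N.
Proof.
apply/leq_sizeP => j hj; rewrite /quadp !coefD !coefCM coefC coefX coefXn.
by case: j hj => [|[|[|j]]] //= _; rewrite !mulr0 !addr0.
Qed.

Definition Y2p := quadp (c 2 0) (c 2 1) (c 2 2).
Definition Y1p := quadp (c 1 0) (c 1 1) (c 1 2).
Lemma Y2p_h t : Y2p.[t] = Y2 c t.
Proof. by rewrite quadp_horner /Y2 !big_ord_recr big_ord0 /= expr0 expr1 mulr1 add0r. Qed.
Lemma Y1p_h t : Y1p.[t] = Y1 c t.
Proof. by rewrite quadp_horner /Y1 !big_ord_recr big_ord0 /= expr0 expr1 mulr1 add0r. Qed.

Definition Nj (j : nat) : {poly R} := (1 - a * ps j)%:P * Y2p - (a / 2)%:P * Y1p.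
Lemma Nj_h j t : (Nj j).[t] = (1 - a * ps j) * Y2 c t - a / 2 * Y1 c t.
Proof. by rewrite /Nj hornerD hornerN !hornerCM Y2p_h Y1p_h. Qed.
Lemma Nj_size j : (size (Nj j) <= 3)%N.
Proof.
rewrite /Nj (leq_trans (size_polyD _ _)) // geq_max size_polyN !mul_polyC.
by rewrite !(leq_trans (size_scale_leq _ _)) // quadp_size.
Qed.

Definition wE n j : {poly R} := (rrn n j / X2 c (ps j))%:P.
Definition wT n j : {poly R} := wE n j * Nj j.
Definition En n := Pol n zs (wE n).
Definition Tn n := - (a%:P * \prod_(0<=k<n.+1) ('X - (zs k)%:P)) - Pol n zs (wT n).

Lemma wE_size n j : (size (wE n j) <= 1)%N.
Proof. exact: size_polyC_leq1. Qed.
Lemma wT_size n j : (size (wT n j) <= 3)%N.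
Proof. by rewrite /wT /wE mul_polyC (leq_trans (size_scale_leq _ _)) // Nj_size. Qed.

Lemma En_size n : (size (En n) <= n)%N.
Proof. by rewrite /En (leq_trans (Pol_size _ _ _ _ (wE_size n))) // addn1 subn1. Qed.

Lemma Tn_size n : (size (Tn n) <= n + 2)%N.
Proof.
rewrite /Tn (leq_trans (size_polyD _ _)) // geq_max size_polyN size_polyN.
rewrite (leq_trans (Pol_size _ _ _ _ (wT_size n))) ?andbT; last lia.
by rewrite mul_polyC (leq_trans (size_scale_leq _ _)) // size_prodX; lia.
Qed.

Definition Lop (g : R -> R) (m : nat) :=
  (1 - a * (xs m.+1 - xs m) / 2) * g (xs m.+1) - (1 + a * (xs m.+1 - xs m) / 2) * g (xs m).

Lemma xsS_neq m : xs m.+1 - xs m != 0.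
Proof. by rewrite neq_sub //; apply/eqP => /xs_inj; lia. Qed.

Lemma En_grid n m : (En n).[ys m] = \prod_(0<=k<n.+1) (ys m - zs k) *
   (- (phi n (xs m.+1) - phi n (xs m)) / ((xs m.+1 - xs m) * Y2 c (ys m))).
Proof.
rewrite /En (Pol_horner n zs (wE n) (ys m)); last by move=> k _; exact: ys_zs.
congr (_ * _).
have hd := xsS_neq m; have hY := Y2ys m.
transitivity (\sum_(0<=j<n) (rrn n j / (xs m - ps j) - rrn n j / (xs m.+1 - ps j)) / ((xs m.+1 - xs m) * Y2 c (ys m))).
  apply: eq_bigr => j _; rewrite hornerC -mulrA -invfM -(rel_xp m j).
  have h1 := neq_sub _ _ (xs_ps m j); have h2 := neq_sub _ _ (xs_ps m.+1 j); have hX := X2ps j.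
  by field; rewrite ?h1 ?h2 ?hX ?hd ?hY.
rewrite -mulr_suml sumrB (phi_xs_pf n m.+1) (phi_xs_pf n m); congr (_ / _).
by set A := \sum_(0 <= i < n) _; set B := \sum_(0 <= i < n) _; ring.
Qed.

Lemma Tn_grid n m : (Tn n).[ys m] = \prod_(0<=k<n.+1) (ys m - zs k) *
   (Lop (phi n) m / (xs m.+1 - xs m)).
Proof.
rewrite /Tn hornerD hornerN hornerN hornerCM horner_prod.
rewrite (Pol_horner n zs (wT n) (ys m)); last by move=> k _; exact: ys_zs.
have -> : \prod_(0 <= i < n.+1) ('X - (zs i)%:P).[ys m] = \prod_(0<=k<n.+1) (ys m - zs k).
  by apply: eq_bigr => i _; rewrite hornerXsubC.
have hd := xsS_neq m; have hY := Y2ys m.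
have -> : Lop (phi n) m / (xs m.+1 - xs m) = - a - \sum_(0<=j<n) rrn n j * ((1 - a * ps j) + a / 2 * (xs m + xs m.+1)) / ((xs m - ps j) * (xs m.+1 - ps j)).
  set d := xs m.+1 - xs m.
  set Sv := \sum_(0<=j<n) rrn n j / (xs m.+1 - ps j).
  set Su := \sum_(0<=j<n) rrn n j / (xs m - ps j).
  have hS : (1 - a * d / 2) * Sv - (1 + a * d / 2) * Su =
     \sum_(0<=j<n) ((1 - a * d / 2) * (rrn n j / (xs m.+1 - ps j)) - (1 + a * d / 2) * (rrn n j / (xs m - ps j))).
    by rewrite sumrB !mulr_sumr.
  transitivity ((- a * d + ((1 - a * d / 2) * Sv - (1 + a * d / 2) * Su)) / d).
    rewrite /Lop (phi_xs_pf n m.+1) (phi_xs_pf n m) -/Sv -/Su -/d.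
    by field; rewrite ?hd.
  rewrite hS mulrDl mulr_suml -sumrN; congr (_ + _); first by field; rewrite ?hd.
  apply: eq_bigr => j _.
  have h1 := neq_sub _ _ (xs_ps m j); have h2 := neq_sub _ _ (xs_ps m.+1 j).
  rewrite /d; by field; rewrite ?h1 ?h2 ?hd.
rewrite mulrBr mulrN mulrC; congr (_ - _); congr (_ * _); apply: eq_bigr => j _.
rewrite /wT /wE hornerCM Nj_h.
have h1 := neq_sub _ _ (xs_ps m j); have h2 := neq_sub _ _ (xs_ps m.+1 j); have hX := X2ps j.
have hD : (ys m - zs j) * (ys m - zs j.+1) = Y2 c (ys m) * ((xs m - ps j) * (xs m.+1 - ps j)) / X2 c (ps j).
  by rewrite rel_xp; field; rewrite ?hX.
have hY1 : Y1 c (ys m) = - (Y2 c (ys m) * (xs m + xs m.+1)) by rewrite relY1_x opprK.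
rewrite hD hY1; by field; rewrite ?h1 ?h2 ?hX ?hY.
Qed.

Lemma Lop_zero n m : (m.+1 < n)%N -> Lop (phi n) m = 0.
Proof. by move=> h; rewrite /Lop !phi_zero ?mulr0 ?subrr //; lia. Qed.

Lemma En_root n m : (m.+1 < n)%N -> (En n).[ys m] = 0.
Proof. by move=> h; rewrite En_grid !phi_zero ?subrr ?oppr0 ?mul0r ?mulr0 //; lia. Qed.

Lemma Tn_root n m : (m.+1 < n)%N -> (Tn n).[ys m] = 0.
Proof. by move=> h; rewrite Tn_grid Lop_zero ?mul0r ?mulr0. Qed.

Lemma ps0E : ps 0 = x' 0. Proof. by []. Qed.

Lemma Nj0_z0 : (Nj 0).[zs 0] = 0.
Proof.
rewrite Nj_h zs0.
have hY1 : Y1 c (y' (-1)) = - (Y2 c (y' (-1)) * (x' (-1) + ps 0)) by rewrite relY1_pm opprK.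
have hp : ps 0 = x' (-1) + 2 / a by rewrite ps0E -hx'; ring.
rewrite hY1 hp; by field; rewrite ?ha.
Qed.

Lemma Tn_z0 n : (0 < n)%N -> (Tn n).[zs 0] = 0.
Proof.
move=> hn; rewrite /Tn hornerD hornerN hornerN hornerCM horner_prod.
rewrite (@prod_eq0 _ _ 0 n.+1 0) ?hornerXsubC ?subrr // mulr0 oppr0 add0r.
by rewrite Pol_bot // /wT hornerCM Nj0_z0 !mulr0 mul0r oppr0.
Qed.

Lemma prodXs_h (f : nat -> R) k Y : (\prod_(r <- [seq f i | i <- index_iota 0 k]) ('X - r%:P)).[Y] = \prod_(0<=i<k) (Y - f i).
Proof. by rewrite horner_prod big_map; apply: eq_bigr => i _; rewrite hornerXsubC. Qed.

Definition eE n := (En n).[zs 0] / \prod_(0<=i<n.-1) (zs 0 - ys i).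

Lemma prod_zs0_ys k : \prod_(0<=i<k) (zs 0 - ys i) != 0.
Proof. by apply: prod_neq0 => i _; rewrite neq_sub // eq_sym ys_zs. Qed.

Lemma En_fac n : (0 < n)%N -> forall Y, (En n).[Y] = eE n * \prod_(0<=i<n.-1) (Y - ys i).
Proof.
move=> hn.
have h1 : all (root (En n)) [seq ys i | i <- index_iota 0 n.-1].
  apply/allP => r /mapP [i]; rewrite mem_index_iota => /andP[_ hi] ->.
  by rewrite /root En_root //; lia.
have h2 : uniq [seq ys i | i <- index_iota 0 n.-1] by rewrite (map_inj_uniq ys_inj) iota_uniq.
have h3 : (size (En n) <= size [seq ys i | i <- index_iota 0 n.-1] + 1)%N.
  by rewrite size_map size_iota (leq_trans (En_size n)) //; lia.
have [l [hl hE]] := factor_roots _ _ _ h1 h2 h3.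
move=> Y; rewrite /eE !hE !hornerM !prodXs_h (const_poly _ Y (zs 0) hl).
by field; rewrite prod_zs0_ys.
Qed.

Lemma Tn_fac n : (0 < n)%N -> exists l : {poly R}, (size l <= 2)%N /\
  forall Y, (Tn n).[Y] = l.[Y] * ((Y - zs 0) * \prod_(0<=i<n.-1) (Y - ys i)).
Proof.
move=> hn.
have h1 : all (root (Tn n)) (zs 0 :: [seq ys i | i <- index_iota 0 n.-1]).
  rewrite /= /root Tn_z0 // eqxx /=.
  apply/allP => r /mapP [i]; rewrite mem_index_iota => /andP[_ hi] ->.
  by rewrite /root Tn_root //; lia.
have h2 : uniq (zs 0 :: [seq ys i | i <- index_iota 0 n.-1]).
  rewrite /= (map_inj_uniq ys_inj) iota_uniq andbT.
  by apply/mapP => [[i _ h]]; move: (ys_zs i 0); rewrite -h eqxx.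
have h3 : (size (Tn n) <= size (zs 0 :: [seq ys i | i <- index_iota 0 n.-1]) + 2)%N.
  by rewrite /= size_map size_iota (leq_trans (Tn_size n)) //; lia.
have [l [hl hT]] := factor_roots _ _ _ h1 h2 h3.
exists l; split=> // Y; rewrite hT hornerM big_cons hornerM hornerXsubC prodXs_h.
by [].
Qed.

Definition Psi k t := \prod_(0<=i<k) ((t - ys i) / (t - qs i)).
Definition Aco n := (Tn n).[zs n] / ((zs n - zs 0) * \prod_(0<=i<n) (zs n - ys i)).
Definition Bco n := (Tn n).[ys n.-1] /
  ((ys n.-1 - zs 0) * \prod_(0<=i<n.-1) (ys n.-1 - ys i) * (ys n.-1 - zs n)).

Lemma zs_neq i j : i != j -> zs i - zs j != 0.
Proof. by move=> h; rewrite neq_sub //; apply: contra h => /eqP /zs_inj ->. Qed.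

Lemma prod_ys_neq (t : R) k : (forall i, t != ys i) -> \prod_(0<=i<k) (t - ys i) != 0.
Proof. by move=> h; apply: prod_neq0 => i _; rewrite neq_sub. Qed.

Lemma prod_qs_neq m k : \prod_(0<=i<k) (ys m - qs i) != 0.
Proof. by apply: prod_neq0 => i _; rewrite neq_sub // ys_qs. Qed.

Lemma decomp N m : Lop (phi N.+1) m =
  (xs m.+1 - xs m) * (Aco N.+1 * Psi N.+1 (ys m) + Bco N.+1 * Psi N (ys m)).
Proof.
have [l [hl hT]] := @Tn_fac N.+1 (ltn0Sn N).
have hg := Tn_grid N.+1 m.
have hd := xsS_neq m.
set y0 := ys m in hg *.
have hPi : \prod_(0<=k<N.+2) (y0 - zs k) = (y0 - zs 0) * (\prod_(0<=i<N) (y0 - qs i) * (y0 - qs N)).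
  by rewrite big_ltn // big_add1 /= big_nat_recr //=; apply: congr2 => //; congr (_ * _);
     [apply: eq_bigr => i _; rewrite zsS | rewrite zsS].
have hLop : Lop (phi N.+1) m = (xs m.+1 - xs m) * ((Tn N.+1).[y0] / \prod_(0<=k<N.+2) (y0 - zs k)).
  rewrite hg; have hP : \prod_(0<=k<N.+2) (y0 - zs k) != 0.
    by apply: prod_neq0 => k _; rewrite neq_sub // ys_zs.
  by field; rewrite ?hd ?hP.
rewrite hLop hPi hT /=.
have hsn : zs N.+1 != ys N by rewrite eq_sym ys_zs.
rewrite (lin_interp _ (zs N.+1) (ys N) y0 hl hsn).
rewrite /Aco /Bco hT hT /= !big_nat_recr //=.
rewrite /Psi !prodf_div !big_nat_recr //=.
rewrite !zsS.
set PY := \prod_(0<=i<N) (y0 - ys i).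
set PQ := \prod_(0<=i<N) (y0 - qs i).
set PZ := \prod_(0<=i<N) (qs N - ys i).
set PW := \prod_(0<=i<N) (ys N - ys i).
have hPQ : PQ != 0 by rewrite /PQ; apply: prod_neq0 => i _; rewrite neq_sub // ys_qs.
have hPZ : PZ != 0 by rewrite /PZ; apply: prod_neq0 => i /andP[_ hi]; rewrite neq_sub // eq_sym ys_qs.
have hPW : PW != 0 by rewrite /PW; apply: prod_neq0 => i /andP[_ hi]; rewrite neq_sub //; apply/eqP => /ys_inj; lia.
have h1 : y0 - zs 0 != 0 by rewrite neq_sub // ys_zs.
have h2 : y0 - qs N != 0 by rewrite neq_sub // ys_qs.
have h3 : qs N - zs 0 != 0 by rewrite -zsS zs_neq.
have h4 : ys N - zs 0 != 0 by rewrite neq_sub // ys_zs.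
have h5 : qs N - ys N != 0 by rewrite neq_sub // eq_sym ys_qs.
have h6 : ys N - qs N != 0 by rewrite neq_sub // ys_qs.
by field; rewrite ?hPQ ?hPZ ?hPW ?h1 ?h2 ?h3 ?h4 ?h5 ?h6.
Qed.

Lemma Tn_top N : (Tn N.+1).[zs N.+1] = - (Nj N).[zs N.+1] * (En N.+1).[zs N.+1].
Proof.
rewrite /Tn hornerD hornerN hornerN hornerCM horner_prod.
rewrite (@prod_eq0 _ _ 0 N.+2 N.+1) ?hornerXsubC ?subrr //; last by apply/andP; split.
rewrite /En !Pol_top //= /wT /wE hornerCM !hornerC; ring.
Qed.

Lemma Tn_last N : (Tn N.+1).[ys N] = - ((1 - a * (xs N.+1 - xs N) / 2) * Y2 c (ys N)) * (En N.+1).[ys N].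
Proof.
rewrite Tn_grid En_grid /Lop (@phi_zero N.+1 N) //.
have hd := xsS_neq N; have hY := Y2ys N.
by field; rewrite ?hd ?hY.
Qed.

Lemma Nj_top N : (Nj N).[zs N.+1] = Y2 c (qs N) * (1 + a * (ps N.+1 - ps N) / 2).
Proof.
rewrite Nj_h zsS.
have hY1 : Y1 c (qs N) = - (Y2 c (qs N) * (ps N + ps N.+1)) by rewrite relY1_p opprK.
by rewrite hY1; field.
Qed.

Lemma Aco_val N : Aco N.+1 = - (Nj N).[zs N.+1] * eE N.+1 / ((zs N.+1 - zs 0) * (zs N.+1 - ys N)).
Proof.
rewrite /Aco Tn_top (@En_fac N.+1 (ltn0Sn N)) /= big_nat_recr //=.
set P := \prod_(0<=i<N) (zs N.+1 - ys i).
have hP : P != 0 by rewrite /P; apply: prod_neq0 => i _; rewrite neq_sub // eq_sym ys_zs.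
have h3 : zs N.+1 - zs 0 != 0 by rewrite zs_neq.
have h5 : zs N.+1 - ys N != 0 by rewrite neq_sub // eq_sym ys_zs.
by field; rewrite ?hP ?h3 ?h5.
Qed.

Lemma Bco_val N : Bco N.+1 = - ((1 - a * (xs N.+1 - xs N) / 2) * Y2 c (ys N)) * eE N.+1 /
   ((ys N - zs 0) * (ys N - zs N.+1)).
Proof.
rewrite /Bco /= Tn_last (@En_fac N.+1 (ltn0Sn N)) /=.
set P := \prod_(0<=i<N) (ys N - ys i).
have hP : P != 0 by rewrite /P; apply: prod_neq0 => i /andP[_ hi]; rewrite neq_sub //; apply/eqP => /ys_inj; lia.
have h4 : ys N - zs 0 != 0 by rewrite neq_sub // ys_zs.
have h6 : ys N - zs N.+1 != 0 by rewrite neq_sub // ys_zs.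
by field; rewrite ?hP ?h4 ?h6.
Qed.

Lemma eE_closed N : eE N.+1 = rrn N.+1 0 / X2 c (ps 0) * \prod_(2<=k<N.+2) (zs 0 - zs k) /
   \prod_(0<=i<N) (zs 0 - ys i).
Proof. by rewrite /eE /En Pol_bot // /wE hornerC. Qed.

Lemma eE_rec N : eE N.+2 * ((ps 0 - ps N.+1) * (zs 0 - ys N)) =
   eE N.+1 * ((ps 0 - xs N.+1) * (zs 0 - zs N.+2)).
Proof.
rewrite !eE_closed !rrn0.
rewrite [\prod_(0<=i<N.+2) (ps 0 - xs i)]big_nat_recr //=.
rewrite [\prod_(1<=i<N.+2) (ps 0 - ps i)]big_nat_recr //=.
rewrite [\prod_(2<=k<N.+3) (zs 0 - zs k)]big_nat_recr //=.
rewrite [\prod_(0<=i<N.+1) (zs 0 - ys i)]big_nat_recr //=.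
set A1 := \prod_(0<=i<N.+1) (ps 0 - xs i).
set A2 := \prod_(1<=i<N.+1) (ps 0 - ps i).
set A3 := \prod_(2<=k<N.+2) (zs 0 - zs k).
set A4 := \prod_(0<=i<N) (zs 0 - ys i).
have hA2 : A2 != 0 by rewrite /A2; apply: prod_neq0 => i /andP[hi _]; rewrite neq_sub //; apply/eqP => /ps_inj; lia.
have hA4 : A4 != 0 by exact: prod_zs0_ys.
have hX := X2ps 0.
have h1 : ps 0 - ps N.+1 != 0 by rewrite neq_sub //; apply/eqP => /ps_inj.
have h2 : zs 0 - ys N != 0 by rewrite neq_sub // eq_sym ys_zs.
by field; rewrite ?hA2 ?hA4 ?hX ?h1 ?h2.
Qed.

Lemma eE1 : eE 1 = (ps 0 - xs 0) / X2 c (ps 0).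
Proof.
rewrite eE_closed rrn0 [\prod_(2<=k<2) _]big_geq // [\prod_(1<=i<1) _]big_geq // [\prod_(0<=i<0) _]big_geq //.
by rewrite big_nat1 !divr1 mulr1.
Qed.

Definition pz (k : nat) := x' (k%:Z - 1).
Lemma pzS k : pz k.+1 = ps k. Proof. by rewrite /pz Sz addrK. Qed.
Lemma pz0 : pz 0 = x' (-1). Proof. by rewrite /pz sub0r. Qed.

Definition cc (c0 : R) (n : nat) := (xs n - pz n) / (xs 0 - x' (-1)) * (\prod_(j < n) eta_coef a x x' j) * c0.

Lemma eta_val j : eta_coef a x x' j = (xs j - x' (-1)) * (1 + a * (ps j - pz j) / 2) /
   ((ps j - x' (-1)) * (1 - a * (xs j.+1 - xs j) / 2)).
Proof. by rewrite /eta_coef /xs /ps /pz Sz. Qed.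

Lemma cc_rec c0 n : cc c0 n.+1 * (xs n - pz n) = cc c0 n * (xs n.+1 - pz n.+1) * eta_coef a x x' n.
Proof. by rewrite /cc big_ord_recr /=; ring. Qed.

Lemma cc0 c0 : cc c0 0 = c0.
Proof.
rewrite /cc big_ord0 pz0 mulr1 divff ?mul1r //.
by rewrite neq_sub // xs_pm.
Qed.


Lemma L_neq N : 1 - a * (xs N.+1 - xs N) / 2 != 0.
Proof.
apply/eqP => h.
have e : a * (xs N.+1 - xs N) = 2 * (1 - (1 - a * (xs N.+1 - xs N) / 2)) by field.
rewrite h subr0 mulr1 in e.
by move: (hL N); rewrite -Sz -/(xs N.+1) -/(xs N) e eqxx.
Qed.

Lemma Y2zm : Y2 c (y' (-1)) != 0. Proof. exact: (G'.2.2 _).2. Qed.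
Lemma qs_zm N : qs N != y' (-1). Proof. by apply/eqP => /(G'.2.1). Qed.
Lemma ps_pm N : ps N != x' (-1). Proof. by apply/eqP => /(G'.1). Qed.

Lemma key_step c0 N : cc c0 N.+1 * Aco N.+1 + cc c0 N.+2 * Bco N.+2 = 0.
Proof.
have hne : xs N.+1 - pz N.+1 != 0 by rewrite pzS neq_sub // xs_ps.
apply: (mulIf hne); rewrite mul0r mulrDl [cc c0 N.+2 * _ * _]mulrAC cc_rec.
suff H : Aco N.+1 * (xs N.+1 - pz N.+1) + (xs N.+2 - pz N.+2) * eta_coef a x x' N.+1 * Bco N.+2 = 0.
  by transitivity (cc c0 N.+1 * (Aco N.+1 * (xs N.+1 - pz N.+1) + (xs N.+2 - pz N.+2) * eta_coef a x x' N.+1 * Bco N.+2));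
  [ring | rewrite H mulr0].
have hE := eE_rec N.
have hee : eE N.+2 = eE N.+1 * ((ps 0 - xs N.+1) * (zs 0 - zs N.+2)) / ((ps 0 - ps N.+1) * (zs 0 - ys N)).
  have n1 : zs 0 - ys N != 0 by rewrite neq_sub // eq_sym ys_zs.
  have n2 : ps 0 - ps N.+1 != 0 by rewrite neq_sub //; apply/eqP => /ps_inj.
  by rewrite -hE; field; rewrite n1 n2.
rewrite Aco_val Bco_val Nj_top eta_val hee !pzS !zsS zs0.
have R1 : Y2 c (y' (-1)) * ((x' (-1) - xs N.+1) * (ps 0 - xs N.+1)) =
    X2 c (xs N.+1) * ((y' (-1) - ys N) * (y' (-1) - ys N.+1)).
  by move: (rel_gen E' E (-1) N.+1); rewrite /xs /ys /ps !Sz !addrK addNr.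
have R2 : Y2 c (y' (-1)) * ((x' (-1) - ps N.+1) * (ps 0 - ps N.+1)) =
    X2 c (ps N.+1) * ((y' (-1) - qs N) * (y' (-1) - qs N.+1)).
  by move: (rel_gen E' E' (-1) N.+1); rewrite /qs /ps !Sz !addrK addNr.
have R3 : Y2 c (ys N.+1) * ((xs N.+1 - ps N.+1) * (xs N.+2 - ps N.+1)) =
    X2 c (ps N.+1) * ((ys N.+1 - qs N) * (ys N.+1 - qs N.+1)).
  by rewrite rel_xp !zsS.
have R4 : Y2 c (qs N) * ((ps N - xs N.+1) * (ps N.+1 - xs N.+1)) =
    X2 c (xs N.+1) * ((qs N - ys N) * (qs N - ys N.+1)).
  by move: (rel_gen E' E N N.+1); rewrite /xs /ys /qs /ps !Sz !addrK.
have K0 := key_alg _ _ _ _ _ _ _ _ _ _ _ _ _ _ _ _ R1 R2 R3 R4 (Y2zm) (neq_sub _ _ (xs_ps N.+1 N.+1)).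
set K := 1 + a * (ps N.+1 - ps N) / 2.
set Lf := 1 - a * (xs N.+2 - xs N.+1) / 2.
have hLf : Lf != 0 by apply: L_neq.
have n1 : qs N - y' (-1) != 0 by rewrite neq_sub // qs_zm.
have n2 : qs N - ys N != 0 by rewrite neq_sub // eq_sym ys_qs.
have n3 : ps N.+1 - x' (-1) != 0 by rewrite neq_sub // ps_pm.
have n4 : ys N.+1 - y' (-1) != 0 by rewrite -zs0 neq_sub // ys_zs.
have n5 : ys N.+1 - qs N.+1 != 0 by rewrite neq_sub // ys_qs.
have n6 : ps 0 - ps N.+1 != 0 by rewrite neq_sub //; apply/eqP => /ps_inj.
have n7 : y' (-1) - ys N != 0 by rewrite -zs0 neq_sub // eq_sym ys_zs.
set T1 := Y2 c (qs N) * (xs N.+1 - ps N) * (ps N.+1 - x' (-1)) * (ys N.+1 - y' (-1)) *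
   (ys N.+1 - qs N.+1) * (ps 0 - ps N.+1) * (y' (-1) - ys N) in K0.
set T2 := (xs N.+2 - ps N.+1) * (xs N.+1 - x' (-1)) * Y2 c (ys N.+1) * (ps 0 - xs N.+1) *
   (y' (-1) - qs N.+1) * (qs N - y' (-1)) * (qs N - ys N) in K0.
transitivity (- (K * eE N.+1) * (T1 + T2) / ((qs N - y' (-1)) * (qs N - ys N) * (ps N.+1 - x' (-1)) *
   (ys N.+1 - y' (-1)) * (ys N.+1 - qs N.+1) * (ps 0 - ps N.+1) * (y' (-1) - ys N))).
  rewrite /T1 /T2; by field; rewrite ?hLf ?n1 ?n2 ?n3 ?n4 ?n5 ?n6 ?n7.
by rewrite K0 mulr0 mul0r.
Qed.

Lemma base_step c0 : - a * cc c0 0 + cc c0 1 * Bco 1 = 0.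
Proof.
rewrite cc0 /cc big_ord_recr big_ord0 /= mul1r eta_val Bco_val eE1 pz0 pzS.
have hX := X2ps 0; have hY := Y2ys 0.
have hD : (ys 0 - zs 0) * (ys 0 - zs 1) = Y2 c (ys 0) * ((xs 0 - ps 0) * (xs 1 - ps 0)) / X2 c (ps 0).
  by rewrite rel_xp; field; rewrite hX.
have hp : ps 0 - x' (-1) = 2 / a by rewrite ps0E hx'.
rewrite hD hp.
have n1 : xs 0 - x' (-1) != 0 by rewrite neq_sub // xs_pm.
have n2 : xs 0 - ps 0 != 0 by rewrite neq_sub // xs_ps.
have n3 : xs 1 - ps 0 != 0 by rewrite neq_sub // xs_ps.
have hLf := L_neq 0.
have hL2 : 2 - a * (xs 1 - xs 0) != 0 by rewrite subr_eq0 eq_sym; move: (hL 0); rewrite -Sz.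
by field; rewrite ?ha ?n1 ?n2 ?n3 ?hLf ?hX ?hY ?hL2.
Qed.

Definition Sn c0 n t := \sum_(0<=j<n.+1) cc c0 j * phi j t.

Lemma Lop_sum c0 n m : Lop (Sn c0 n) m = \sum_(0<=j<n.+1) cc c0 j * Lop (phi j) m.
Proof. by rewrite /Lop /Sn !mulr_sumr -sumrB; apply: eq_bigr => j _; ring. Qed.

Definition Kc c0 n := if n is 0 then - a * cc c0 0 else cc c0 n * Aco n.

Lemma Psi0 t : Psi 0 t = 1. Proof. by rewrite /Psi big_geq. Qed.

Lemma Psi_zero n m : (m < n)%N -> Psi n (ys m) = 0.
Proof. by move=> h; rewrite /Psi (@prod_eq0 _ _ 0 n m) // subrr mul0r. Qed.

Lemma IC c0 n m : Lop (Sn c0 n) m = (xs m.+1 - xs m) * Kc c0 n * Psi n (ys m).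
Proof.
elim: n => [|n IH].
  by rewrite Lop_sum big_nat1 /Lop !phi0 Psi0 /=; field.
rewrite Lop_sum big_nat_recr //= -Lop_sum IH decomp.
have hk : Kc c0 n + cc c0 n.+1 * Bco n.+1 = 0.
  by case: n {IH} => [|N] /=; [apply: base_step | apply: key_step].
transitivity ((xs m.+1 - xs m) * (cc c0 n.+1 * Aco n.+1) * Psi n.+1 (ys m) +
   (xs m.+1 - xs m) * Psi n (ys m) * (Kc c0 n + cc c0 n.+1 * Bco n.+1)); first ring.
by rewrite hk mulr0 addr0.
Qed.

Lemma Sn_x0 c0 n : Sn c0 n (xs 0) = c0.
Proof.
rewrite /Sn big_ltn // phi0 mulr1 cc0 big1_seq ?addr0 // => j.
by rewrite mem_index_iota => /andP[_ /andP[hj _]]; rewrite phi_zero ?mulr0.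
Qed.

Lemma interp_ok c0 (f : R -> R) : f (xs 0) = c0 -> (forall m, Lop f m = 0) ->
  forall n k, (k <= n)%N -> Sn c0 n (xs k) = f (xs k).
Proof.
move=> f0 hf n; elim=> [|k IH] hk; first by rewrite Sn_x0.
have h1 := IC c0 n k; rewrite Psi_zero // mulr0 /Lop in h1.
have h2 := hf k; rewrite /Lop in h2.
have hLf := L_neq k.
apply: (mulfI hLf).
rewrite -[LHS]subr0 -h1 -[RHS]subr0 -h2 IH; first ring.
exact: ltnW.
Qed.

Lemma final_sec (f : R -> R) (cf : nat -> R) :
  f (x 0) = cf 0%N ->
  (forall n : nat, Dop x f n%:Z = a * Mop x f n%:Z) ->
  (forall (N k : nat), (k <= N)%N ->
     \sum_(n < N.+1) cf n *
        \prod_(i < n) ((x k%:Z - x i%:Z) / (x k%:Z - x' i%:Z)) = f (x k%:Z)) ->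
  forall n : nat,
    cf n = (x n%:Z - x' (n%:Z - 1)) / (x 0 - x' (-1)) *
           (\prod_(j < n) eta_coef a x x' j) * cf 0%N.
Proof.
move=> f0 hD hI.
have hLf : forall m, Lop f m = 0.
  move=> m; have := hD m; rewrite /Dop /Mop /Lop -Sz -/(xs m) -/(xs m.+1) => h.
  have hd := xsS_neq m.
  have h' : f (xs m.+1) - f (xs m) = a * ((f (xs m) + f (xs m.+1)) / 2) * (xs m.+1 - xs m).
    by rewrite -h; field; rewrite hd.
  transitivity ((f (xs m.+1) - f (xs m)) - a * ((f (xs m) + f (xs m.+1)) / 2) * (xs m.+1 - xs m)).
    by field.
  by rewrite h' subrr.
have hint := interp_ok (cf 0) f f0 hLf.
have key : forall n, cf n = cc (cf 0) n.
  elim/ltn_ind => n IH.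
  have e1 : \sum_(j < n.+1) cf j * phi j (xs n) = f (xs n).
    by rewrite -(hI n n (leqnn n)); apply: eq_bigr => j _; rewrite /phi big_mkord.
  have e2 : \sum_(j < n.+1) cc (cf 0) j * phi j (xs n) = f (xs n).
    by rewrite -(hint n n (leqnn n)) /Sn big_mkord.
  rewrite -e2 !big_ord_recr /= in e1.
  have e3 : \sum_(j < n) cf j * phi j (xs n) = \sum_(j < n) cc (cf 0) j * phi j (xs n).
    by apply: eq_bigr => j _; rewrite IH.
  rewrite e3 in e1; move/addrI: e1 => e1.
  exact: (mulIf (phi_neq0 _ _ (leqnn n)) e1).
by move=> n; rewrite key.
Qed.
End Main.

Theorem mainTheorem10 (R : numClosedFieldType) (c : nat -> nat -> R)
  (x y x' y' : int -> R) (a : R) (f : R -> R) (cf : nat -> R) :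
  elliptic_seq c x y -> elliptic_seq c x' y' ->
  general_position c x y -> general_position c x' y' ->
  (forall n m : int, x n != x' m /\ y n != y' m) ->
  a != 0 ->
  x' 0 - x' (-1) = 2 / a ->
  f (x 0) = cf 0%N -> cf 0%N != 0 ->
  (forall n : nat, a * (x (n%:Z + 1) - x n%:Z) != 2) ->
  (forall n : nat, Dop x f n%:Z = a * Mop x f n%:Z) ->
  (forall (N k : nat), (k <= N)%N ->
     \sum_(n < N.+1) cf n *
        \prod_(i < n) ((x k%:Z - x i%:Z) / (x k%:Z - x' i%:Z)) = f (x k%:Z)) ->
  forall n : nat,
    cf n = (x n%:Z - x' (n%:Z - 1)) / (x 0 - x' (-1)) *
           (\prod_(j < n) eta_coef a x x' j) * cf 0%N.
Proof.
move=> E E' G G' cross ha hx' f0 _ hL hD hI.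
exact: (@final_sec R c x y x' y' a E E' G G' cross ha hx' hL f cf f0 hD hI).
Qed.
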